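(* Let $n\ge5$, let $\{C_i,C_j,C_k\}$ be a critical triplet in $\mathcal C_{[n]}$, let $C\in\mathcal C_{[n]}$ with $C>F_{ijk}$, and let $A\in \hat S([n])$ with $A\gtrdot F_{ijk}$. Then $C$ covers $A$ in $\hat S([n])$ if and only if the edge $e(C)$ is incident to the vertex $v(A)$ in the tree $T(F_{ijk})$.
   Context: An $X$-tree is a pair $(T,\phi)$ with $T$ a finite tree and $\phi:X\to V(T)$ a map such that every vertex not in $\phi(X)$ has degree at least $3$; a vertex is labeled if it lies in $\phi(X)$. An $X$-forest is a set $\{(A,\mathcal T_A):A\in\pi\}$ where $\pi$ is a set partition of $X$ and each $\mathcal T_A$ is an $A$-tree. Contracting an edge $e=(u,v)$ removes $e$ and identifies $u,v$, the new vertex carrying the union of the labels. Deleting $e$ removes it without changing vertices; it is safe if each of $u,v$ is labeled or has degree greater than $3$. The Tuffley poset $S(X)$ is the set of $X$-forests with $\mathcal F'\le\mathcal F$ iff $\mathcal F'$ is obtained from $\mathcal F$ by a sequence of contractions and safe deletions; covers are single contractions or safe deletions. $\hat S(X)=S(X)\cup\{\hat0,\hat1\}$. $\mathcal C_{X}$ is the set of maximal elements of $S(X)$: trees with leaves labeled bijectively by $X$ and internal vertices unlabeled of degree $3$. Here $X=[n]$. NNI: for $C\in\mathcal C_X$ and an internal edge $\alpha=(u,v)$ separating subtrees $A,B$ at $u$ from $C',D$ at $v$, swapping $B$ with $C'$ or $B$ with $D$ is a nearest neighbor interchange over $\alpha$. A critical triplet is a triple $\{C_i,C_j,C_k\}$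 of elements of $\mathcal C_{[n]}$ such that: (1) $C_i$ has a leaf labeled $x$ whose leaf edge $e_x$ is adjacent to two internal edges $e_{x_1}$ and $e_{x_2}$; (2) $C_j\neq C_i$ and both $C_i,C_j$ cover $F_j$, the element obtained from $C_i$ by contracting $e_{x_1}$; (3) $C_k\ne C_i$ and both $C_i,C_k$ cover $F_k$, obtained from $C_i$ by contracting $e_{x_2}$. The element $F_{ijk}$ is obtained from $F_j$ by (safely) deleting the edge incident to the vertex labeled $x$ (equivalently, obtained in the same way from $F_k$); it consists of an isolated vertex labeled $x$ together with an $([n]\setminus\{x\})$-tree, denoted $T(F_{ijk})$. Every $A\gtrdot F_{ijk}$ in $\hat S([n])$ is obtained from $F_{ijk}$ by adding an edge between the isolated vertex $x$ and a unique vertex of $T(F_{ijk})$, denoted $v(A)$. Every $C\in\mathcal C_{[n]}$ with $C>F_{ijk}$ is obtained from $F_{ijk}$ by subdividing a unique edge of $T(F_{ijk})$, denoted $e(C)$, with a new vertex and joining that new vertex by an edge to the isolated vertex $x$. *)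

(* Defs.v *)
(* X-forests, the Tuffley poset S([n]) and its bounded
   extension \hat S([n]), with elements represented by concrete labelled
   graphs, all notions being taken up to label-preserving isomorphism. *)
From mathcomp Require Import all_boot.

Unset Printing Implicit Defensive.

Record graph (n : nat) := Graph {
  gV : finType;
  gadj : rel gV;
  glab : 'I_n -> gV }.

Arguments gV {n} g.
Arguments gadj {n} g _ _.
Arguments glab {n} g _.

Section Defs.
Variable n : nat.
Implicit Types G H K : graph n.

Definition deg G (v : gV G) : nat := #|[pred w | gadj G v w]|.

Definition labeled G (v : gV G) : bool := [exists i, glab G i == v].

Definition acyclic G : Prop :=
  forall s : seq (gV G), uniq s -> 3 <= size s -> ~~ cycle (gadj G) s.

(* An [n]-forest: a finite forest with a labelling map such that every
   unlabeled vertex has degree at least 3.  (The set partition of [n] is the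
   one induced by the connected components; every component automatically
   carries a label.) *)
Definition is_Xforest G : Prop :=
  [/\ symmetric (gadj G), irreflexive (gadj G), acyclic G &
      forall v : gV G, ~~ labeled G v -> 3 <= deg G v].

Definition iso G H : Prop :=
  exists f : gV G -> gV H, [/\ bijective f,
    forall p q, gadj H (f p) (f q) = gadj G p q &
    forall i, glab H i = f (glab G i)].

(* H is (isomorphic to) the result of contracting the edge (u,a) of G:
   u and a are identified, the new vertex carrying the union of labels. *)
Definition is_contraction G H (u a : gV G) : Prop :=
  gadj G u a /\
  exists m : gV G -> gV H,
    [/\ forall w, exists p, m p = w,
        m u = m a,
        forall p q, m p = m q -> [\/ p = q, p = u /\ q = a | p = a /\ q = u],
        forall w1 w2, gadj H w1 w2 <->
           (w1 <> w2 /\ exists p q, [/\ m p = w1, m q = w2 & gadj G p q]) &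
        forall i, glab H i = m (glab G i)].

Definition is_deletion G H (u v : gV G) : Prop :=
  gadj G u v /\
  exists m : gV G -> gV H, [/\ bijective m,
    forall p q, gadj H (m p) (m q) <->
       (gadj G p q /\ ~ ((p = u /\ q = v) \/ (p = v /\ q = u))) &
    forall i, glab H i = m (glab G i)].

Definition safe G (u v : gV G) : Prop :=
  (labeled G u \/ 3 < deg G u) /\ (labeled G v \/ 3 < deg G v).

Definition step G H : Prop :=
  exists u v : gV G,
    is_contraction G H u v \/ (safe G u v /\ is_deletion G H u v).

Inductive below : graph n -> graph n -> Prop :=
  | below_iso G H : iso H G -> below G H
  | below_step G H K : step H K -> below G K -> below G H.

(* \hat S([n]) = S([n]) + {\hat 0, \hat 1} *)
Inductive hatS := Bot | Elt of graph n | Top.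

Definition hat_valid (a : hatS) : Prop :=
  match a with Elt G => is_Xforest G | _ => True end.

Definition hat_le (a b : hatS) : Prop :=
  match a, b with
  | Bot, _ => True
  | _, Top => True
  | Elt G, Elt H => below G H
  | _, _ => False
  end.

Definition hat_lt (a b : hatS) : Prop := hat_le a b /\ ~ hat_le b a.

Definition hat_covers (a b : hatS) : Prop :=
  [/\ hat_valid a, hat_valid b, hat_lt a b &
      forall c, hat_valid c -> ~ (hat_lt a c /\ hat_lt c b)].

Definition inC G : Prop :=
  is_Xforest G /\ forall H, is_Xforest H -> below G H -> below H G.

Definition internal_edge G (s t : gV G) : Prop :=
  [/\ gadj G s t, 1 < deg G s & 1 < deg G t].

(* C is (isomorphic to) F with the edge (p,q) subdivided by a new vertex,
   the new vertex being joined to the vertex labeled x *)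
Definition is_subdiv_attach G C (x : 'I_n) (p q : gV G) : Prop :=
  gadj G p q /\
  exists m : option (gV G) -> gV C, [/\ bijective m,
    forall s t, gadj C (m (Some s)) (m (Some t)) <->
       (gadj G s t /\ ~ ((s = p /\ t = q) \/ (s = q /\ t = p))),
    forall s, gadj C (m None) (m (Some s)) <->
       [\/ s = p, s = q | s = glab G x],
    forall s, gadj C (m (Some s)) (m None) <->
       [\/ s = p, s = q | s = glab G x] &
    ~~ gadj C (m None) (m None)] /\
    forall i, glab C i = m (Some (glab G i)).

Definition is_add_edge G A (s t : gV G) : Prop :=
  exists m : gV G -> gV A, [/\ bijective m,
    forall p q, gadj A (m p) (m q) <->
       [\/ gadj G p q, p = s /\ q = t | p = t /\ q = s] &
    forall i, glab A i = m (glab G i)].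

End Defs.

Arguments deg {n} G v.
Arguments labeled {n} G v.
Arguments acyclic {n} G.
Arguments is_Xforest {n} G.
Arguments iso {n} G H.
Arguments is_contraction {n} G H u a.
Arguments is_deletion {n} G H u v.
Arguments safe {n} G u v.
Arguments step {n} G H.
Arguments below {n} _ _.
Arguments Bot {n}.
Arguments Top {n}.
Arguments Elt {n} _.
Arguments hat_valid {n} a.
Arguments hat_le {n} a b.
Arguments hat_lt {n} a b.
Arguments hat_covers {n} a b.
Arguments inC {n} G.
Arguments internal_edge {n} G s t.
Arguments is_subdiv_attach {n} G C x p q.
Arguments is_add_edge {n} G A s t.

(* Main.v *)
Require Import Defs.
From mathcomp Require Import all_boot zify.
Set Implicit Arguments. Unset Strict Implicit.


Section Gen.
Variable n : nat.
Implicit Types G H K : graph n.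

Definition pairs G := #|[set pq : gV G * gV G | gadj G pq.1 pq.2]|.
Definition symirr G := symmetric (gadj G) /\ irreflexive (gadj G).

Lemma card_minus2 (T : finType) (P : {set T}) e1 e2 :
  e1 \in P -> e2 \in P -> e1 != e2 ->
  #|[set z in P | (z != e1) && (z != e2)]| + 2 = #|P|.
Proof.
move=> h1 h2 ne.
rewrite (cardsD1 e1 P) h1 (cardsD1 e2 (P :\ e1)) !inE eq_sym ne h2 /=.
rewrite addnC; congr (_ + _).
- apply: eq_card => z; rewrite !inE; by case: (z == e1); case: (z == e2); case: (z \in P).
Qed.

Lemma iso_sym G H : iso G H -> iso H G.
Proof.
case=> f [[g fg gf] hadj hlab]; exists g; split.
- by exists f.
- by move=> p q; rewrite -hadj !gf.
- by move=> i; rewrite hlab fg.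
Qed.

Lemma iso_refl G : iso G G.
Proof. exists id; split => //; by exists id. Qed.

Lemma iso_pairs G H : iso G H -> pairs G = pairs H.
Proof.
case=> f [[g fg gf] hadj _].
rewrite /pairs -(card_in_imset (f := fun pq => (f pq.1, f pq.2))).
- apply: eq_card => [[w1 w2]]; rewrite !inE /=.
  apply/imsetP/idP.
  + by case=> [[p q]]; rewrite inE /= => hpq [-> ->]; rewrite hadj.
  + move=> h; exists (g w1, g w2); last by rewrite !gf.
    by rewrite inE /= -hadj !gf.
- move=> [p1 q1] [p2 q2] _ _ [] e1 e2.
  by rewrite -(fg p1) -(fg q1) e1 e2 !fg.
Qed.

Lemma iso_symirr G H : iso G H -> symirr G -> symirr H.
Proof.
case=> f [[g fg gf] hadj _] [sy ir]; split.
- by move=> w1 w2; rewrite -(gf w1) -(gf w2) !hadj sy.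
- by move=> w; rewrite -(gf w) hadj ir.
Qed.

Lemma step_dec G H : symirr G -> step G H -> symirr H /\ pairs H + 2 <= pairs G.
Proof.
move=> [sy ir] [u [v [[huv [m [msurj muv minj madj mlab]]] | [_ [huv [m [[mi mK Km] madj mlab]]]]]]].
- have uv : u != v by apply/eqP => e; move: huv; rewrite e ir.
  split; first split.
  + move=> w1 w2; apply/idP/idP => /madj [ne [p [q [e1 e2 hpq]]]]; apply/madj;
     (split; [by move=> e; apply: ne | exists q, p; split => //; by rewrite sy]).
  + by move=> w; apply/negP => /madj [].
  + rewrite /pairs -(card_minus2 (e1 := (u, v)) (e2 := (v, u))) ?inE /= ?(sy v u) //; last first.
      by apply/eqP => [[e]]; move: uv; rewrite e eqxx.
    rewrite leq_add2r.
    apply: leq_trans (leq_imset_card (fun pq => (m pq.1, m pq.2)) _).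
    apply: subset_leq_card; apply/subsetP => [[w1 w2]]; rewrite inE /= => /madj [ne [p [q [e1 e2 hpq]]]].
    apply/imsetP; exists (p, q); last by rewrite e1 e2.
    rewrite !inE /= hpq /=; apply/andP; split; apply/eqP => -[e3 e4]; apply: ne;
      by rewrite -e1 -e2 e3 e4.
- have uv : u != v by apply/eqP => e; move: huv; rewrite e ir.
  split; first split.
  + move=> w1 w2; rewrite -(Km w1) -(Km w2).
    apply/idP/idP => /madj [hh nn]; apply/madj; (split; [by rewrite sy | move=> hh2; apply: nn; tauto]).
  + by move=> w; rewrite -(Km w); apply/negbTE/negP => /madj []; rewrite ir.
  + rewrite /pairs -(card_minus2 (e1 := (u, v)) (e2 := (v, u))) ?inE /= ?(sy v u) //; last first.
      by apply/eqP => [[e]]; move: uv; rewrite e eqxx.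
    rewrite leq_add2r.
    apply: leq_trans (leq_imset_card (fun pq => (m pq.1, m pq.2)) _).
    apply: subset_leq_card; apply/subsetP => [[w1 w2]]; rewrite inE /=.
    rewrite -(Km w1) -(Km w2) => /madj [hh nn].
    apply/imsetP; exists (mi w1, mi w2) => //.
    rewrite !inE /= hh /=; apply/andP; split; apply/eqP => -[e3 e4]; apply: nn; tauto.
Qed.

Lemma below_dec G H : below G H -> symirr H -> iso H G \/ pairs G + 2 <= pairs H.
Proof.
elim=> [G0 H0 hi | G0 H0 K0 hs hb IH] si; first by left.
right; have [siK le] := step_dec si hs.
case: (IH siK) => [hi | h].
- by rewrite -(iso_pairs hi).
- apply: leq_trans le; apply: leq_trans h _; exact: leq_addr.
Qed.

Lemma below_le G H : below G H -> symirr H -> pairs G <= pairs H.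
Proof.
move=> hb si; case: (below_dec hb si) => [hi | h].
- by rewrite (iso_pairs hi).
- apply: leq_trans h; exact: leq_addr.
Qed.

Lemma Xforest_symirr G : is_Xforest G -> symirr G.
Proof. by case. Qed.

End Gen.


Section Gen2.
Variable n : nat.
Implicit Types G H K : graph n.

Lemma contr_iso G K H (s t : gV G) : is_contraction G K s t -> iso K H -> is_contraction G H s t.
Proof.
move=> [hst [m [msurj mst minj madj mlab]]] [f [[g fg gf] fadj flab]].
split => //; exists (fun p => f (m p)); split.
- move=> w; have [p hp] := msurj (g w); exists p; by rewrite hp gf.
- by rewrite mst.
- move=> p q e; apply: minj; by rewrite -(fg (m p)) e fg.
- move=> w1 w2; rewrite -(gf w1) -(gf w2) fadj; split.
  + move/madj => [ne [p [q [e1 e2 h]]]]; split; first by move=> e; apply: ne; by rewrite -(fg (g w1)) e fg.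
    by exists p, q; rewrite e1 e2.
  + move=> [ne [p [q [e1 e2 h]]]]; apply/madj; split; first by move=> e; apply: ne; by rewrite e.
    exists p, q; split => //; apply: (can_inj fg); by rewrite ?e1 ?e2 gf.
- by move=> i; rewrite flab mlab.
Qed.

Lemma no_tri G (x y z : gV G) : is_Xforest G -> gadj G x y -> gadj G y z -> gadj G x z -> False.
Proof.
move=> [sy ir ac _] h1 h2 h3.
have xy : x != y by apply/eqP => e; move: h1; rewrite e ir.
have yz : y != z by apply/eqP => e; move: h2; rewrite e ir.
have xz : x != z by apply/eqP => e; move: h3; rewrite e ir.
have := ac [:: x; y; z]; rewrite /= !inE.
rewrite (negbTE xy) (negbTE xz) yz h1 h2 (sy z x) h3 /=; by move/(_ isT isT).
Qed.

Lemma contr_exact G H (u a : gV G) : is_Xforest G -> is_contraction G H u a -> pairs H + 2 = pairs G.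
Proof.
move=> XG [hua [m [msurj mua minj madj mlab]]].
have [sy ir _ _] := XG.
have uv : u != a by apply/eqP => e; move: hua; rewrite e ir.
rewrite /pairs -(card_minus2 (e1 := (u, a)) (e2 := (a, u))) ?inE /= ?(sy a u) //; last first.
  by apply/eqP => [[e]]; move: uv; rewrite e eqxx.
congr (_ + _).
rewrite -(card_in_imset (f := fun pq => (m pq.1, m pq.2))).
- apply: eq_card => [[w1 w2]]; rewrite !inE /=; apply/idP/idP.
  + move/madj => [ne [p [q [e1 e2 hpq]]]].
    apply/imsetP; exists (p, q); last by rewrite e1 e2.
    rewrite !inE /= hpq /=; apply/andP; split; apply/eqP => -[e3 e4]; apply: ne;
      by rewrite -e1 -e2 e3 e4.
  + case/imsetP => [[p q]]; rewrite !inE /= => /andP [hpq /andP [n1 n2]] [-> ->].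
    apply/madj; split; last by exists p, q.
    move/minj => [e | [e1 e2] | [e1 e2]]; first by move: hpq; rewrite e ir.
    * by move: n1; rewrite e1 e2 eqxx.
    * by move: n2; rewrite e1 e2 eqxx.
- move=> [p1 q1] [p2 q2]; rewrite !inE /= => /andP [h1 /andP [n11 n12]] /andP [h2 /andP [n21 n22]] [].
  move/minj => hp /minj hq.
  case: hp => [ep | [ep1 ep2] | [ep1 ep2]]; case: hq => [eq | [eq1 eq2] | [eq1 eq2]];
    subst => //; try by move: n11 n12 n21 n22; rewrite !eqxx.
all: try (by move: h1; rewrite ir); try (by move: h2; rewrite ir).
all: exfalso; first [ exact: (no_tri XG h1 hua h2) | exact: (no_tri XG h2 hua h1) | exact: (no_tri XG hua h2 h1) | exact: (no_tri XG hua h1 h2)].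
Qed.


Lemma add_pairs G A (s t : gV G) : symirr G -> s != t -> ~~ gadj G s t ->
  is_add_edge G A s t -> pairs A = pairs G + 2.
Proof.
move=> [sy ir] st nst [m [[mi mK Km] madj mlab]].
have nts : ~~ gadj G t s by rewrite sy.
rewrite /pairs.
have -> : [set pq : gV A * gV A | gadj A pq.1 pq.2] =
   [set (m pq.1, m pq.2) | pq in (s, t) |: ((t, s) |: [set pq : gV G * gV G | gadj G pq.1 pq.2])].
  apply/setP => [[w1 w2]]; rewrite inE /=; apply/idP/imsetP.
  + rewrite -(Km w1) -(Km w2) => /madj [h | [e1 e2] | [e1 e2]].
    * by exists (mi w1, mi w2); rewrite // !inE /= h !orbT.
    * by exists (mi w1, mi w2); rewrite // !inE /= e1 e2 !eqxx.
    * by exists (mi w1, mi w2); rewrite // !inE /= e1 e2 !eqxx orbT.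
  + case=> [[p q]]; rewrite !inE /= => hh [-> ->]; apply/madj.
    case/orP: hh => [/eqP [-> ->] | /orP [/eqP [-> ->] | h]]; by [apply: Or31 | apply: Or32 | apply: Or33].
rewrite card_in_imset; last first.
  move=> [p1 q1] [p2 q2] _ _ [] e1 e2; by rewrite -(mK p1) -(mK q1) e1 e2 !mK.
rewrite !cardsU1 !inE /= (negbTE nst) (negbTE nts).
have -> : ((s, t) == (t, s)) = false by apply/eqP => -[e]; move: st; rewrite e eqxx.
by rewrite /= !add1n addn2.
Qed.

Lemma del_card G H (u v : gV G) : is_deletion G H u v -> #|gV G| = #|gV H|.
Proof. by move=> [_ [m [bm _ _]]]; apply: bij_eq_card bm. Qed.

End Gen2.


Section Rig.
Variable n : nat.
Implicit Types G H K : graph n.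

Lemma min_deg2 G (N : {set gV G}) : is_Xforest G ->
  (forall r, r \in N -> exists w1 w2, [/\ w1 \in N, w2 \in N, w1 != w2, gadj G r w1 & gadj G r w2]) ->
  forall r, r \notin N.
Proof.
move=> [sy ir ac _] hN r0; apply/negP => r0N.
have ext : forall k, 2 <= k -> exists z s, [/\ uniq (z :: s), all (mem N) (z :: s),
   path (gadj G) z s & size (z :: s) = k].
  elim=> // k IH; rewrite ltnS leq_eqVlt => /orP [/eqP <- | hk].
  - have [w1 [w2 [h1 h2 _ a1 _]]] := hN _ r0N.
    exists w1, [:: r0]; rewrite /= !inE h1 r0N (sy w1 r0) a1 /= andbT; split => //.
    by apply/eqP => e; move: a1; rewrite e ir.
  - have [z [s [hu hall hp hs]]] := IH hk.
    case: s hu hall hp hs => [|z2 s'] hu hall hp hs; first by move: hs hk => /= <-.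
    have zN : z \in N by move: hall => /= /andP [].
    have [w1 [w2 [h1 h2 ne a1 a2]]] := hN _ zN.
    have [w [wN aw wz2]] : exists w, [/\ w \in N, gadj G z w & w != z2].
      case e1 : (w1 == z2); last by exists w1; rewrite e1.
      exists w2; split => //; apply/eqP => e2; move: ne; by rewrite (eqP e1) e2 eqxx.
    have wz : w != z by apply/eqP => e; move: aw; rewrite e ir.
    case ws : (w \in z :: z2 :: s').
    + exfalso; set s := z2 :: s'.
      have wins : w \in s by move: ws; rewrite inE (negbTE wz).
      set i := index w s.
      have i1 : 0 < i by rewrite /i /s /= eq_sym (negbTE wz2).
      have isz : i < size s by rewrite index_mem.
      set l := take i.+1 s.
      have szl : size l = i.+1 by rewrite size_takel.
      have lastl : last z l = w.
        by rewrite -nth_last szl /= nth_take // nth_index.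
      move: hu => /= /andP [zs us].
      have hc : cycle (gadj G) (z :: l).
        change (path (gadj G) z (rcons l z)); rewrite rcons_path lastl (sy w z) aw andbT; exact: take_path.
      have hul : uniq (z :: l).
        rewrite cons_uniq take_uniq // andbT; apply/negP => /mem_take; exact/negP.
      have hsz : 3 <= size (z :: l) by change (3 <= (size l).+1); rewrite szl ltnS.
      by move: (ac _ hul hsz); rewrite hc.
    + exists w, [:: z, z2 & s']; split.
      * by rewrite cons_uniq ws hu.
      * by rewrite /= wN.
      * by rewrite /= (sy w z) aw.
      * by rewrite /= -hs.
have c0 : 0 < #|N| by apply/card_gt0P; exists r0.
have [z [s [hu hall _ hs]]] := ext #|N|.+1 c0.
have hsub : {subset z :: s <= enum N}.
  move=> w hw; rewrite mem_enum; exact: (allP hall).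
have := uniq_leq_size hu hsub.
by rewrite hs -cardE ltnn.
Qed.
End Rig.

Section Rig2.
Variable n : nat.
Implicit Types G H K : graph n.

Lemma rigid G (g : gV G -> gV G) : is_Xforest G -> injective g ->
  (forall i, g (glab G i) = glab G i) ->
  (forall r1 r2, gadj G r1 r2 -> gadj G (g r1) (g r2)) -> forall r, g r = r.
Proof.
move=> XG ginj glabf gadjf.
have [sy ir ac dg] := XG.
set N := [set r | g r != r].
suff : forall r, r \notin N by move=> h r; move: (h r); rewrite inE negbK => /eqP.
apply: (min_deg2 XG) => r; rewrite inE => rN.
have unl : ~~ labeled G r.
  apply/negP => /existsP [i /eqP e]; move: rN; by rewrite -e glabf eqxx.
have d3 := dg r unl.
have : 1 < #|[predI [pred w | gadj G r w] & [pred w | w \in N]]|.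
  rewrite ltnNge; apply/negP => h1.
  have h2 : 1 < #|[predD [pred w | gadj G r w] & [pred w | w \in N]]|.
    move: d3; rewrite /deg -(cardID [pred w | w \in N]) => h; apply: contraLR h; rewrite -!leqNgt => h3; exact: (leq_add h1 h3).
  have [c1 [c2 [hc1 hc2 ne]]] := card_gt1P h2.
  move: hc1 hc2; rewrite !inE => /andP [n1 a1] /andP [n2 a2].
  move: n1 n2; rewrite !negbK => /eqP f1 /eqP f2.
  have b1 : gadj G (g r) c1 by rewrite -f1; apply: gadjf.
  have b2 : gadj G (g r) c2 by rewrite -f2; apply: gadjf.
  have rc1 : r != c1 by apply/eqP => e; move: rN; rewrite e f1 eqxx.
  have rc2 : r != c2 by apply/eqP => e; move: rN; rewrite e f2 eqxx.
  have grc1 : g r != c1 by apply/eqP => e; move: rN; rewrite -(inj_eq ginj) e f1 -e eqxx.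
  have grc2 : g r != c2 by apply/eqP => e; move: rN; rewrite -(inj_eq ginj) e f2 -e eqxx.
  have hu : uniq [:: r; c1; g r; c2].
    by rewrite /= !inE !negb_or rc1 rc2 (eq_sym r (g r)) rN (eq_sym c1 (g r)) grc1 ne grc2.
  have hc : cycle (gadj G) [:: r; c1; g r; c2].
    by rewrite /= a1 (sy c1) b1 b2 (sy c2) a2.
  by move: (ac _ hu isT); rewrite hc.
move/card_gt1P => [w1 [w2 [h1 h2 ne]]]; exists w1, w2.
move: h1 h2; rewrite !inE => /andP [a1 m1] /andP [a2 m2]; split => //; by rewrite inE.
Qed.
End Rig2.


Section XIso.
Variable n : nat.

Lemma x_isolated (Ci Fj Fijk : graph n) (x : 'I_n) (u a : gV Ci) (y : gV Fj) :
  is_Xforest Ci -> deg Ci (glab Ci x) = 1 -> gadj Ci (glab Ci x) u -> a != glab Ci x ->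
  is_contraction Ci Fj u a -> gadj Fj (glab Fj x) y -> is_deletion Fj Fijk (glab Fj x) y ->
  forall r, ~~ gadj Fijk (glab Fijk x) r.
Proof.
move=> [sy ir _ _] d1 hxu ax [_ [m1 [_ _ m1inj m1adj m1lab]]] hy [_ [m2 [[m2i m2K Km2] m2adj m2lab]]] r.
set X := glab Ci x.
have [z hz] := mem_card1 d1.
have nX : forall r, gadj Ci X r -> r = u.
  move=> r' h; have : r' \in [pred w | gadj Ci X w] by [].
  have : u \in [pred w | gadj Ci X w] by [].
  by rewrite !hz !inE => /eqP -> /eqP ->.
have Xu : X != u by apply/eqP => e; move: hxu; rewrite -/X e ir.
have nF : forall w, gadj Fj (glab Fj x) w -> w = m1 u.
  move=> w; rewrite m1lab -/X => /m1adj [_ [p [q [e1 e2 hpq]]]].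
  case: (m1inj _ _ e1) => [ep | [ep eX] | [ep eX]].
  - by rewrite -e2; congr m1; apply: nX; rewrite -ep.
  - by move: ax; rewrite -eX eqxx.
  - by move: Xu; rewrite -eX eqxx.
have ey := nF _ hy.
rewrite -(Km2 r) m2lab; apply/negP => /m2adj [h nn]; apply: nn; left; split => //.
by rewrite (nF _ h) ey.
Qed.
End XIso.

Section Main.
Variable n : nat.
Variables (F C A : graph n) (x : 'I_n) (p q v : gV F).
Hypothesis XF : is_Xforest F.
Hypothesis XC : is_Xforest C.
Hypothesis XA : is_Xforest A.
Hypothesis xiso : forall r, ~~ gadj F (glab F x) r.
Hypothesis pnx : p != glab F x.
Hypothesis vnx : v != glab F x.
Hypothesis hsub : is_subdiv_attach F C x p q.
Hypothesis hadd : is_add_edge F A (glab F x) v.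

Let xF := glab F x.

Lemma sym_F : symmetric (gadj F). Proof. by case: XF. Qed.
Lemma irr_F : irreflexive (gadj F). Proof. by case: XF. Qed.

Lemma xiso' r : ~~ gadj F r xF.
Proof. by rewrite sym_F xiso. Qed.

Lemma qnx : q != xF.
Proof.
case: hsub => hpq _; apply/eqP => e; move: (xiso' p); by rewrite -e hpq.
Qed.

Lemma subdiv_swap : is_subdiv_attach F C x q p.
Proof.
case: hsub => hpq [m [[bm SS NS SN NN] lab]]; split; first by rewrite sym_F.
exists m; split => //; split => //.
- move=> s t; rewrite SS; split => -[h1 h2]; split => //; move=> h3; apply: h2; tauto.
- move=> s; rewrite NS; split; case=> h; by [apply: Or31 | apply: Or32 | apply: Or33].
- move=> s; rewrite SN; split; case=> h; by [apply: Or31 | apply: Or32 | apply: Or33].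
Qed.

End Main.


Section Constr.
Variable n : nat.

Lemma contr_to_add (F C A : graph n) (x : 'I_n) (p q : gV F) :
  symirr F -> (forall r, ~~ gadj F (glab F x) r) -> p != glab F x ->
  is_subdiv_attach F C x p q -> is_add_edge F A (glab F x) p ->
  exists s t, is_contraction C A s t.
Proof.
move=> [sy ir] xiso pnx [hpq [mc [[[mci mcK Kmc] SS NS SN NN] lab]]] [mA [[mAi mAK KmA] aadj alab]].
set xF := glab F x.
set mm := fun c => match mci c with None => mA p | Some r => mA r end.
have mmS : forall r, mm (mc (Some r)) = mA r by move=> r; rewrite /mm mcK.
have mmN : mm (mc None) = mA p by rewrite /mm mcK.
have mcsurj : forall c, exists o, c = mc o by move=> c; exists (mci c); rewrite Kmc.
exists (mc None), (mc (Some p)); split; first by apply/NS; apply: Or31.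
exists mm; split.
- by move=> w; exists (mc (Some (mAi w))); rewrite mmS KmA.
- by rewrite mmS mmN.
- move=> c1 c2; have [o1 ->] := mcsurj c1; have [o2 ->] := mcsurj c2.
  case: o1 => [r1|]; case: o2 => [r2|]; rewrite ?mmS ?mmN => /(can_inj mAK) e; subst.
  + by apply: Or31.
  + by apply: Or33.
  + by apply: Or32.
  + by apply: Or31.
- move=> w1 w2; rewrite -(KmA w1) -(KmA w2); move: (mAi w1) (mAi w2) => r1 r2.
  rewrite aadj; split.
  + move=> h; split.
      move/(can_inj mAK) => e; case: h => [h | [e1 e2] | [e1 e2]].
      * by move: h; rewrite e ir.
      * by move: pnx; rewrite -e2 -e e1 eqxx.
      * by move: pnx; rewrite -e1 e e2 eqxx.
    case: h => [h | [e1 e2] | [e1 e2]].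
    * case e12 : ((r1 == p) && (r2 == q)).
        move/andP: e12 => [/eqP e1 /eqP e2].
        exists (mc None), (mc (Some r2)); rewrite mmN mmS e1; split => //; apply/NS; by apply: Or32.
      case e21 : ((r1 == q) && (r2 == p)).
        move/andP: e21 => [/eqP e1 /eqP e2].
        exists (mc (Some r1)), (mc None); rewrite mmN mmS e2; split => //; apply/SN; by apply: Or32.
      exists (mc (Some r1)), (mc (Some r2)); rewrite !mmS; split => //; apply/SS; split => //.
      case=> -[/eqP a1 /eqP a2]; [by move: e12; rewrite a1 a2 | by move: e21; rewrite a1 a2].
    * exists (mc (Some r1)), (mc None); rewrite mmN mmS e2; split => //; apply/SN; rewrite e1; by apply: Or33.
    * exists (mc None), (mc (Some r2)); rewrite mmN mmS e1; split => //; apply/NS; rewrite e2; by apply: Or33.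
  + move=> [ne [c1 [c2 [e1 e2 hc]]]].
    move: e1 e2 hc; have [o1 ->] := mcsurj c1; have [o2 ->] := mcsurj c2.
    case: o1 => [s1|]; case: o2 => [s2|]; rewrite ?mmS ?mmN => /(can_inj mAK) e1 /(can_inj mAK) e2;
      rewrite -?e1 -?e2 in ne *.
    * by move/SS => [h _]; apply: Or31.
    * move/SN => [e | e | e]; rewrite e in ne *.
      -- by exfalso; apply: ne.
      -- by apply: Or31; rewrite sy.
      -- by apply: Or32.
    * move/NS => [e | e | e]; rewrite e in ne *.
      -- by exfalso; apply: ne.
      -- by apply: Or31.
      -- by apply: Or33.
    * by move=> h; move: NN; rewrite h.
- by move=> i; rewrite alab lab mmS.
Qed.

End Constr.


Section Cov.
Variable n : nat.

Lemma covers_of_step (A C : graph n) : is_Xforest A -> is_Xforest C ->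
  (exists s t, is_contraction C A s t) -> pairs C = pairs A + 2 -> hat_covers (Elt A) (Elt C).
Proof.
move=> XA XC [s [t hc]] hp.
have hb : below A C.
  apply: (@below_step n A C A); last exact: below_iso (iso_refl A).
  by exists s, t; left.
have nb : forall G, below C G -> symirr G -> pairs G >= pairs A + 2.
  by move=> G h si; rewrite -hp; apply: below_le.
split => //.
- split => //= h; have := nb _ h (Xforest_symirr XA); lia.
- case=> [|G|] hv [h1 h2] //=.
  + by case: h1.
  + move: h1 h2 => [b1 nb1] [b2 nb2] /=.
    case: (below_dec b1 (Xforest_symirr hv)) => [i1 | l1].
      by apply: nb1; apply: below_iso; apply: iso_sym.
    case: (below_dec b2 (Xforest_symirr XC)) => [i2 | l2].
      by apply: nb2; apply: below_iso; apply: iso_sym.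
    move: l1 l2; rewrite hp; lia.
  + by case: h2.
Qed.

Lemma step_of_covers (A C : graph n) : is_Xforest A -> is_Xforest C ->
  pairs C = pairs A + 2 -> hat_covers (Elt A) (Elt C) ->
  (exists s t, is_contraction C A s t) \/ #|gV C| = #|gV A|.
Proof.
move=> XA XC hp [_ _ [hb nb] _]; move: hb nb => /= hb nb.
inversion hb as [G H hi e1 e2 | G H K hs hb' e1 e2]; subst.
- by exfalso; apply: nb; apply: below_iso; apply: iso_sym.
- have [siK lK] := step_dec (Xforest_symirr XC) hs.
  case: (below_dec hb' siK) => [hi | l].
  + case: hs => [s [t [hc | [_ hd]]]].
    * by left; exists s, t; apply: contr_iso hc hi.
    * right; rewrite (del_card hd); case: hi => f [bf _ _]; exact: bij_eq_card bf.
  + move: l lK; rewrite hp; lia.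
Qed.
End Cov.


Section Core.
Variable n : nat.
Variables (F C A : graph n) (x : 'I_n) (p q v : gV F).
Hypothesis XF : is_Xforest F.
Hypothesis XC : is_Xforest C.
Hypothesis XA : is_Xforest A.
Hypothesis xiso : forall r, ~~ gadj F (glab F x) r.
Hypothesis pnx : p != glab F x.
Hypothesis vnx : v != glab F x.
Hypothesis hsub : is_subdiv_attach F C x p q.
Hypothesis hadd : is_add_edge F A (glab F x) v.
Local Notation xF := (glab F x).

Lemma core (s t : gV C) : is_contraction C A s t -> v = p \/ v = q.
Proof.
move=> [hst [h [hsurj hst' hinj hadj hlab]]].
have qnx' := qnx XF xiso hsub.
case: hsub => hpq [mc [[[mci mcK Kmc] SS NS SN NN] lab]].
case: hadd => mA [[mAi mAK KmA] aadj alab].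
have [syF irF _ dgF] := XF. have [syC irC _ _] := XC.
set W := mc None.
have mcsurj : forall c, exists o, c = mc o by move=> c; exists (mci c); rewrite Kmc.
have mcinj := can_inj mcK.
have WS : forall r, W <> mc (Some r) by move=> r /mcinj.
have pq : p != q by apply/eqP => e; move: hpq; rewrite e irF.
have nbx : forall w, gadj A (mA xF) w -> w = mA v.
  move=> w; rewrite -(KmA w) aadj => -[hh | [_ e] | [e _]].
  - by move: (xiso (mAi w)); rewrite hh.
  - by rewrite e.
  - by move: vnx; rewrite e eqxx.
have hX : h (mc (Some xF)) = mA xF by rewrite -lab -hlab alab.
have nXc : forall c, gadj C (mc (Some xF)) c -> c = W.
  move=> c; have [[r|] ->] := mcsurj c => //.
  by move/SS => [hh _]; move: (xiso r); rewrite hh.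
have hne : forall c1 c2, c1 <> c2 -> c1 <> s -> c1 <> t -> h c1 <> h c2.
  by move=> c1 c2 n12 n1 n2 /hinj [e | [e _] | [e _]].
have hA : forall c1 c2, gadj C c1 c2 -> h c1 <> h c2 -> gadj A (h c1) (h c2).
  by move=> c1 c2 hc ne; apply/hadj; split => //; exists c1, c2.
have WSx : gadj C W (mc (Some xF)) by apply/NS; apply: Or33.
have WSp : gadj C W (mc (Some p)) by apply/NS; apply: Or31.
have WSq : gadj C W (mc (Some q)) by apply/NS; apply: Or32.
set Xc := mc (Some xF).
case: (boolP ((Xc == s) || (Xc == t))) => [Xst | Xnst].
- (* the contracted edge is {Xc, W} *)
  have hWX : h W = h Xc.
    case/orP: Xst => /eqP e.
    + have hh : gadj C Xc t by rewrite e.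
      by rewrite e hst' (nXc _ hh).
    + have hh : gadj C Xc s by rewrite syC e.
      by rewrite -(nXc _ hh) e hst'.
  have stW : forall c, c = s \/ c = t -> c = W \/ c = Xc.
    move=> c; case/orP: Xst => /eqP e [] ->.
    + by right; rewrite e.
    + have hh : gadj C Xc t by rewrite e.
      by left; apply: nXc hh.
    + have hh : gadj C Xc s by rewrite syC e.
      by left; apply: nXc hh.
    + by right; rewrite e.
  have key : forall r, r != xF -> mc (Some r) <> W -> (r = p \/ r = q) -> h (mc (Some r)) = mA v.
    move=> r rx _ hr; apply: nbx; rewrite -hX -/Xc -hWX.
    apply: hA; first by case: hr => ->.
    apply: not_eq_sym; apply: hne.
    + by apply: not_eq_sym; apply: WS.
    + move=> e; case: (stW _ (or_introl e)) => e2; [exact: (WS r (esym e2)) | by move/mcinj: e2 => [] /eqP; rewrite (negbTE rx)].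
    + move=> e; case: (stW _ (or_intror e)) => e2; [exact: (WS r (esym e2)) | by move/mcinj: e2 => [] /eqP; rewrite (negbTE rx)].
  have e1 := key p pnx (fun e => WS _ (esym e)) (or_introl erefl).
  have e2 := key q qnx' (fun e => WS _ (esym e)) (or_intror erefl).
  exfalso; move: (esym e2); rewrite -e1 => /hinj [/mcinj [] /eqP | [ea eb] | [ea eb]].
  + by rewrite (negbTE pq).
  + case: (stW _ (or_introl ea)) => e3; [exact: (WS p (esym e3)) | by move/mcinj: e3 => [] /eqP; rewrite (negbTE pnx)].
  + case: (stW _ (or_intror ea)) => e3; [exact: (WS p (esym e3)) | by move/mcinj: e3 => [] /eqP; rewrite (negbTE pnx)].
- have Xs : Xc <> s by move=> e; move: Xnst; rewrite e eqxx.
  have Xt : Xc <> t by move=> e; move: Xnst; rewrite e eqxx orbT.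
  have hWv : h W = mA v.
    apply: nbx; rewrite -hX; apply: hA.
    + by rewrite syC.
    + by apply: hne => // e; apply: (WS xF); rewrite e.
  case: (boolP ((W == s) || (W == t))) => [Wst | Wnst].
  + (* the contracted edge is {W, S r} with r in {p, q} *)
    have [r [hr hrW stWr]] : exists r, [/\ r = p \/ r = q, h (mc (Some r)) = h W &
        forall c, c = s \/ c = t -> c = W \/ c = mc (Some r)].
      case/orP: Wst => /eqP e.
      * have [[r|] et] := mcsurj t; last by move: hst; rewrite -e et (negbTE NN).
        have hh : gadj C W (mc (Some r)) by rewrite e -et.
        case/NS: hh => er.
        -- exists r; split; [by left | by rewrite -et -hst' e | move=> c [] ->; [by left | by right]].
        -- exists r; split; [by right | by rewrite -et -hst' e | move=> c [] ->; [by left | by right]].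
        -- by exfalso; apply: Xt; rewrite et er.
      * have [[r|] es] := mcsurj s; last by move: hst; rewrite -e es (negbTE NN).
        have hh : gadj C (mc (Some r)) W by rewrite e -es.
        case/SN: hh => er.
        -- exists r; split; [by left | by rewrite -es hst' e | move=> c [] ->; [by right | by left]].
        -- exists r; split; [by right | by rewrite -es hst' e | move=> c [] ->; [by right | by left]].
        -- by exfalso; apply: Xs; rewrite es er.
    set g := fun r' => mAi (h (mc (Some r'))).
    have gS : forall r', mA (g r') = h (mc (Some r')) by move=> r'; rewrite /g KmA.
    have ginj : injective g.
      move=> r1 r2 e; have := congr1 mA e; rewrite !gS => /hinj [/mcinj [] // | [e1 e2] | [e1 e2]].
      * case: (stWr _ (or_introl e1)) => e3; first by case: (WS _ (esym e3)).
        case: (stWr _ (or_intror e2)) => e4; first by case: (WS _ (esym e4)).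
        by move: e3 e4 => /mcinj [] -> /mcinj [] ->.
      * case: (stWr _ (or_intror e1)) => e3; first by case: (WS _ (esym e3)).
        case: (stWr _ (or_introl e2)) => e4; first by case: (WS _ (esym e4)).
        by move: e3 e4 => /mcinj [] -> /mcinj [] ->.
    have glabg : forall i, g (glab F i) = glab F i.
      by move=> i; rewrite /g -lab -hlab alab mAK.
    have gadjg : forall r1 r2, gadj F r1 r2 -> gadj F (g r1) (g r2).
      move=> r1 r2 hr12.
      have r1x : r1 != xF by apply/eqP => e; move: (xiso r2); rewrite -e hr12.
      have r2x : r2 != xF by apply/eqP => e; move: (xiso r1); rewrite -e syF hr12.
      have ne12 : h (mc (Some r1)) <> h (mc (Some r2)).
        rewrite -!gS => /(can_inj mAK) /ginj e; move: hr12; by rewrite e irF.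
      have hh : gadj A (h (mc (Some r1))) (h (mc (Some r2))).
        apply/hadj; split => //.
        case: (boolP (((r1 == p) && (r2 == q)) || ((r1 == q) && (r2 == p)))) => hpq12; last first.
          exists (mc (Some r1)), (mc (Some r2)); split => //; apply/SS; split => //.
          case=> -[e1 e2]; move: hpq12; by rewrite e1 e2 !eqxx ?orbT.
        have r12 : (r1 = r /\ (r2 = p \/ r2 = q)) \/ (r2 = r /\ (r1 = p \/ r1 = q)).
          case/orP: hpq12 => /andP [/eqP e1 /eqP e2]; case: hr => er; subst; tauto.
        case: r12 => [[e1 o2] | [e2 o1]].
        * exists W, (mc (Some r2)); rewrite -hrW e1; split => //; apply/NS.
          by case: o2 => ->; [apply: Or31 | apply: Or32].
        * exists (mc (Some r1)), W; rewrite -hrW e2; split => //; apply/SN.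
          by case: o1 => ->; [apply: Or31 | apply: Or32].
      move: hh; rewrite -!gS aadj => -[hh | [e1 _] | [_ e2]] //.
      * by move: r1x; rewrite -(glabg x) in e1; rewrite (ginj _ _ e1) eqxx.
      * by move: r2x; rewrite -(glabg x) in e2; rewrite (ginj _ _ e2) eqxx.
    have rig := rigid XF ginj glabg gadjg.
    have egr : g r = v by apply: (can_inj mAK); rewrite gS hrW hWv.
    by rewrite -egr rig.
  + have Ws : W <> s by move=> e; move: Wnst; rewrite e eqxx.
    have Wt : W <> t by move=> e; move: Wnst; rewrite e eqxx orbT.
    have hWn : forall c, h c = h W -> c = W.
      by move=> c /hinj [e | [_ e] | [_ e]].
    have vunl : ~~ labeled F v.
      apply/negP => /existsP [i /eqP e].
      have : h (glab C i) = h W by rewrite -hlab alab e hWv.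
      by move/hWn; rewrite lab => /esym /WS.
    have d3 := dgF v vunl.
    set P := [pred w | gadj A (h W) w].
    have up : #|P| <= 3.
      apply: leq_trans (card_size [:: h Xc; h (mc (Some p)); h (mc (Some q))]).
      apply: subset_leq_card; apply/subsetP => w; rewrite inE => /hadj [_ [c1 [c2 [e1 e2 hc]]]].
      have ec1 := hWn _ e1; rewrite ec1 in hc.
      have [[r|] ec2] := mcsurj c2; last by move: hc; rewrite ec2 (negbTE NN).
      rewrite -e2 ec2 !inE; move: hc; rewrite ec2 => /NS [] ->; by rewrite eqxx ?orbT.
    have low : 4 <= #|P|.
      have sub : [set mA r | r in xF |: [set r | gadj F v r]] \subset P.
        apply/subsetP => w /imsetP [r]; rewrite !inE => hr ->.
        rewrite hWv aadj; case/orP: hr => [/eqP -> | hr]; [by apply: Or33 | by apply: Or31].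
      apply: leq_trans (subset_leq_card sub).
      rewrite card_imset; last exact: (can_inj mAK).
      rewrite cardsU1 inE syF (negbTE (xiso v)) add1n ltnS.
      apply: leq_trans d3 _; rewrite /deg; apply: subset_leq_card; apply/subsetP => r; by rewrite !inE.
    by move: (leq_trans low up).
Qed.
End Core.

Unset Implicit Arguments.

Theorem mainTheorem7 (n : nat)
  (Ci Cj Ck Fj Fk Fijk : graph n) (x : 'I_n) (u a b : gV Ci) (y : gV Fj) :
  5 <= n ->
  inC Ci -> inC Cj -> inC Ck ->
  deg Ci (glab Ci x) = 1 -> gadj Ci (glab Ci x) u ->
  a != b -> a != glab Ci x -> b != glab Ci x ->
  internal_edge Ci u a -> internal_edge Ci u b ->
  is_contraction Ci Fj u a -> ~ iso Ci Cj ->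
  hat_covers (Elt Fj) (Elt Ci) -> hat_covers (Elt Fj) (Elt Cj) ->
  is_contraction Ci Fk u b -> ~ iso Ci Ck ->
  hat_covers (Elt Fk) (Elt Ci) -> hat_covers (Elt Fk) (Elt Ck) ->
  gadj Fj (glab Fj x) y -> is_deletion Fj Fijk (glab Fj x) y ->
  forall (C : graph n) (p q : gV Fijk),
    inC C -> hat_lt (Elt Fijk) (Elt C) ->
    p != glab Fijk x -> is_subdiv_attach Fijk C x p q ->
  forall (A : hatS n) (A' : graph n) (v : gV Fijk),
    hat_covers (Elt Fijk) A ->
    A = Elt A' -> v != glab Fijk x -> is_add_edge Fijk A' (glab Fijk x) v ->
    (hat_covers A (Elt C) <-> (v = p \/ v = q)).
Proof.
move=> _ [XCi _] _ _ d1 hxu _ ax _ _ _ hcj _ _ _ _ _ _ _ hy hdel C p q [XC _] _ pnx hsub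
  A A' v hcovA eA vnx hadd.
subst A.
case: hcovA => XF XA _ _; rewrite /hat_valid in XF XA.
have xiso := x_isolated XCi d1 hxu ax hcj hy hdel.
set xF := glab Fijk x.
have siF := Xforest_symirr XF.
have [syF irF _ _] := XF.
pose Ap := @Graph n (gV Fijk) (fun r1 r2 : gV Fijk => [|| gadj Fijk r1 r2, (r1 == xF) && (r2 == p) | (r1 == p) && (r2 == xF)]) (glab Fijk).
have addp : is_add_edge Fijk Ap xF p.
  exists id; split; first by exists id.
  - move=> r1 r2 /=; split.
    + case/or3P => [h | /andP [/eqP -> /eqP ->] | /andP [/eqP -> /eqP ->]];
        by [apply: Or31 | apply: Or32 | apply: Or33].
    + by case=> [-> | [-> ->] | [-> ->]]; rewrite ?eqxx ?orbT.
  - by [].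
have xp : xF != p by rewrite eq_sym.
have xv : xF != v by rewrite eq_sym.
have hp : pairs C = pairs A' + 2.
  have [s [t hc]] := contr_to_add siF xiso pnx hsub addp.
  rewrite -(contr_exact XC hc) (add_pairs siF xp (xiso p) addp).
  by rewrite (add_pairs siF xv (xiso v) hadd).
split.
- move=> hcov; case: (step_of_covers XA XC hp hcov) => [[s [t hc]] | hcard].
  + exact: (core XF XC xiso pnx vnx hsub hadd hc).
  + exfalso.
    case: hsub => _ [mc [[bmc _ _ _ _] _]].
    case: hadd => mA [bmA _ _].
    move: hcard; rewrite -(bij_eq_card bmc) -(bij_eq_card bmA) card_option.
    lia.
- case=> ev.
  + apply: covers_of_step XA XC _ hp.
    rewrite ev in hadd; exact: (contr_to_add siF xiso pnx hsub hadd).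
  + apply: covers_of_step XA XC _ hp.
    rewrite ev in hadd.
    exact: (contr_to_add siF xiso (qnx XF xiso hsub) (subdiv_swap XF hsub) hadd).
Qed.
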